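(* Let $x>3/4$ be a real number. Then there exists $J_0(x)$ such that for every integer $J\geq\max(3,J_0(x))$ and every $(\mathbf{m},\mathbf{n})=(m_1,\dots,m_J,n_1,\dots,n_J)\in[0,x]^{2J}$ satisfying $$\sum_im_i+\sum_jn_j=x,\qquad m_i\leq x/J\ \text{ for all } i,\qquad n_1\geq n_2\geq\cdots\geq n_J,$$ we have $\eta(\mathbf{m},\mathbf{n})\geq\min\bigl(\frac1{24},\frac{4x-3}{24}\bigr)$, where $$\eta(\mathbf{m},\mathbf{n})=\max\Bigl\{\max_\sigma\min\Bigl(\frac14,\frac\sigma2,\frac{x-\sigma}{2}-\frac14\Bigr),\ \frac18-\max\Bigl(0,\frac12\bigl(1-(n_1+n_2)\bigr)\Bigr)\Bigr\},$$ and $\sigma$ ranges over all sub-sums $\sigma=\sum_{i\in\mathcal{I}}m_i+\sum_{j\in\mathcal{J}}n_j$ for $\mathcal{I},\mathcal{J}$ arbitrary subsets of $\{1,\dots,J\}$. *)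

(* Defs.v *)
From mathcomp Require Import all_boot all_order all_algebra.
Set Implicit Arguments. Unset Strict Implicit. Unset Printing Implicit Defensive.
Import Order.TTheory GRing.Theory Num.Theory.
Local Open Scope ring_scope.

Definition subsum (R : realFieldType) (J : nat) (m n : 'I_J -> R)
  (I Js : {set 'I_J}) : R :=
  \sum_(i in I) m i + \sum_(j in Js) n j.

Definition eta_term (R : realFieldType) (x sigma : R) : R :=
  Num.min (1/4) (Num.min (sigma / 2) ((x - sigma) / 2 - 1/4)).

(* max over all sub-sums sigma (the max is over a finite nonempty family,
   seeded with the sigma = 0 term, which belongs to the family) *)
Definition eta_sub (R : realFieldType) (J : nat) (x : R) (m n : 'I_J -> R) : R :=
  \big[Num.max/eta_term x 0]_(IJ : {set 'I_J} * {set 'I_J})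
     eta_term x (subsum m n IJ.1 IJ.2).

(* eta(m,n); requires J >= 2 so that n_1, n_2 exist (indices 0 and 1) *)
Definition eta (R : realFieldType) (J : nat) (x : R) (m n : 'I_J.+2 -> R) : R :=
  Num.max (eta_sub x m n)
          (1/8 - Num.max 0 ((1 - (n ord0 + n (lift ord0 ord0))) / 2)).

(* Main.v *)
Require Import Defs.
From mathcomp Require Import all_boot all_order all_algebra.
From mathcomp Require Import lra zify.
Import Order.TTheory GRing.Theory Num.Theory.
Local Open Scope ring_scope.

Lemma greedy (R : realFieldType) (T : finType) (f g : T -> R) (a L : R) :
  0 <= a -> 0 <= L -> forall k (A1 A2 : {set T}), (#|A1| + #|A2| <= k)%N ->
  (forall i, i \in A1 -> f i <= L) -> (forall j, j \in A2 -> g j <= L) ->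
  a <= \sum_(i in A1) f i + \sum_(j in A2) g j ->
  exists B1 B2 : {set T},
    a <= \sum_(i in B1) f i + \sum_(j in B2) g j <= a + L.
Proof.
move=> ha hL k; elim: k => [|k IH] A1 A2 hk h1 h2 hs.
- have [hle|hgt] := leP (\sum_(i in A1) f i + \sum_(j in A2) g j) (a + L).
    by exists A1, A2; rewrite hs hle.
  have E1 : A1 = set0 by apply/eqP; rewrite -cards_eq0; lia.
  have E2 : A2 = set0 by apply/eqP; rewrite -cards_eq0; lia.
  by move: hgt; rewrite E1 E2 !big_set0; lra.
have [hle|hgt] := leP (\sum_(i in A1) f i + \sum_(j in A2) g j) (a + L).
  by exists A1, A2; rewrite hs hle.
have [E1|/set0Pn [i hi]] := eqVneq A1 set0.
  have [E2|/set0Pn [j hj]] := eqVneq A2 set0.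
    by move: hgt; rewrite E1 E2 !big_set0; lra.
  apply: (IH A1 (A2 :\ j)).
  - by move: hk; rewrite (cardsD1 j A2) hj; lia.
  - by [].
  - by move=> j' /setD1P [_ ?]; apply: h2.
  - move: hgt; rewrite (big_setD1 j hj) /=; have := h2 j hj; lra.
apply: (IH (A1 :\ i) A2).
- by move: hk; rewrite (cardsD1 i A1) hi; lia.
- by move=> i' /setD1P [_ ?]; apply: h1.
- by [].
- move: hgt; rewrite (big_setD1 i hi) /=; have := h1 i hi; lra.
Qed.

Lemma le_bigmax_seq (R : realFieldType) (T : eqType) (F : T -> R) idx
  (r : seq T) i0 : i0 \in r -> F i0 <= \big[Num.max/idx]_(i <- r) F i.
Proof.
elim: r => [//|y r IH]; rewrite inE big_cons => /orP [/eqP ->|h].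
  by rewrite le_max lexx.
by rewrite le_max (IH h) orbT.
Qed.

Lemma eta_sub_ge (R : realFieldType) J (x : R) (m n : 'I_J -> R) I Js :
  eta_term x (subsum m n I Js) <= eta_sub x m n.
Proof.
rewrite /eta_sub.
have := @le_bigmax_seq _ _ (fun IJ : {set 'I_J} * {set 'I_J} =>
          eta_term x (subsum m n IJ.1 IJ.2)) (eta_term x 0) _ _ (mem_index_enum (I, Js)).
by [].
Qed.

Lemma eta_term_ge (R : realFieldType) (x s c : R) :
  c <= 1/4 -> 2 * c <= s -> s <= x - 1/2 - 2 * c -> c <= eta_term x s.
Proof.
move=> h1 h2 h3; rewrite /eta_term !le_min h1 /=.
apply/andP; split; lra.
Qed.

Theorem proposition4p4 (R : realFieldType) (x : R) (hx : 3/4 < x) :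
  exists J0 : nat, forall J : nat, (3 <= J.+2)%N -> (J0 <= J.+2)%N ->
    forall m n : 'I_J.+2 -> R,
      (forall i, 0 <= m i <= x) -> (forall j, 0 <= n j <= x) ->
      \sum_i m i + \sum_j n j = x ->
      (forall i, m i <= x / (J.+2)%:R) ->
      (forall j k : 'I_J.+2, (j <= k)%N -> n k <= n j) ->
      Num.min (1/24) ((4 * x - 3) / 24) <= eta x m n.
Proof.
exists 0%N => J hJ _ m n hm hn hsum hmx hsort.
set c := Num.min _ _.
have c1 : c <= 1/24 by rewrite /c ge_min lexx.
have c2 : c <= (4 * x - 3) / 24 by rewrite /c ge_min lexx orbT.
have c0 : 0 < c by rewrite /c lt_min; apply/andP; split; lra.
clearbody c.
set L := x - 1/2 - 4 * c.
have hmL : forall i, m i <= L.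
  move=> i; apply: (le_trans (hmx i)).
  have h3 : (3 : R) <= (J.+2)%:R by rewrite (ler_nat R 3).
  have hx3 : x / (J.+2)%:R <= x / 3.
    rewrite ler_pM2l; last lra.
    rewrite lef_pV2 // ?posrE; lra.
  move: hx3; rewrite /L; generalize (x / (J.+2)%:R) => y; lra.
have Ldef : L = x - 1/2 - 4 * c by [].
clearbody L; clear hJ hmx.
have hm0 : forall i, 0 <= m i by move=> i; case/andP: (hm i).
have hn0 : forall j, 0 <= n j by move=> j; case/andP: (hn j).
set o1 : 'I_J.+2 := lift ord0 ord0.
have o1v : nat_of_ord o1 = 1%N by [].
have o10 : o1 != ord0 by apply/eqP => /(congr1 val).
have hsortn : forall j : 'I_J.+2, j != ord0 -> n j <= n o1.
  move=> j hj; apply: hsort; rewrite o1v lt0n; apply: contra hj => /eqP h.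
  by apply/eqP; apply: val_inj.
have o1E : lift ord0 ord0 = o1 by [].
clearbody o1.
have hn01 : n o1 <= n ord0 by apply: hsort.
have Tm : \sum_(i in [set: 'I_J.+2]) m i = \sum_i m i.
  by apply: eq_bigl => i; rewrite in_setT.
have Tn : \sum_(i in [set: 'I_J.+2]) n i = \sum_i n i.
  by apply: eq_bigl => i; rewrite in_setT.
have i0 : ord0 \in [set: 'I_J.+2] by rewrite in_setT.
have i1 : o1 \in [set: 'I_J.+2] :\ ord0 by rewrite in_setD1 o10 in_setT.
have S1 : \sum_j n j = n ord0 + \sum_(j in [set: 'I_J.+2] :\ ord0) n j.
  by rewrite -Tn (big_setD1 ord0 i0).
have S2 : \sum_(j in [set: 'I_J.+2] :\ ord0) n j =
    n o1 + \sum_(j in [set: 'I_J.+2] :\ ord0 :\ o1) n j.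
  by rewrite (big_setD1 o1 i1).
have pos3 : 0 <= \sum_(j in [set: 'I_J.+2] :\ ord0 :\ o1) n j by apply: sumr_ge0.
have posm : 0 <= \sum_i m i by apply: sumr_ge0.
have single : forall j, 2 * c <= n j <= x - 1/2 - 2 * c -> c <= eta x m n.
  move=> j /andP [a b]; rewrite /eta le_max; apply/orP; left.
  apply: le_trans (eta_sub_ge _ _ x m n set0 [set j]).
  by apply: eta_term_ge; rewrite /subsum ?big_set0 ?big_set1; clear -a b c1 c2 c0 hx; lra.
have greedy_ok : forall A2 : {set 'I_J.+2},
    (forall j, j \in A2 -> n j <= L) ->
    2 * c <= \sum_(i in [set: 'I_J.+2]) m i + \sum_(j in A2) n j ->
    c <= eta x m n.
  move=> A2 h2 hs.
  have ha : 0 <= 2 * c by clear -c0; lra.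
  have hL : 0 <= L by rewrite Ldef; clear -c1 c2 hx; lra.
  have [B1 [B2 /andP [b1 b2]]] := greedy R _ m n (2 * c) L
    ha hL _ _ _ (leqnn _)
    (fun i _ => hmL i) h2 hs.
  rewrite /eta le_max; apply/orP; left.
  apply: le_trans (eta_sub_ge _ _ x m n B1 B2).
  by apply: eta_term_ge; rewrite /subsum; move: b1 b2; rewrite Ldef; clear -c1 c2 c0 hx; lra.
have [hA|hB] := leP (3/4 + 2 * c) (n ord0 + n o1).
  rewrite /eta le_max; apply/orP; right.
  have hmax : Num.max 0 ((1 - (n ord0 + n o1)) / 2) <= 1/8 - c.
    by rewrite ge_max; apply/andP; split; clear -hA c1; lra.
  rewrite o1E; move: hmax; generalize (Num.max 0 ((1 - (n ord0 + n o1)) / 2)) => t.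
  clear; lra.
have [hB1|hB2] := leP (n o1) L.
  apply: (greedy_ok ([set: 'I_J.+2] :\ ord0)).
    move=> j /setD1P [hj _]; apply: le_trans (hsortn j hj) hB1.
  rewrite Tm; move: hsum; rewrite S1 S2.
  clear -hB c2 c0 hx pos3 hn01 hn0; have := hn0 o1; lra.
have [hup|hup] := leP (n o1) (x - 1/2 - 2 * c).
  apply: (single o1); rewrite hup andbT; move: hB2; rewrite Ldef.
  clear -c1 c2 c0 hx; lra.
case: (boolP [exists j, (j \in [set: 'I_J.+2] :\ ord0 :\ o1) && (L < n j)]).
  move=> /existsP [j /andP [hj hLj]].
  apply: (single j).
  have : 0 <= \sum_(k in [set: 'I_J.+2] :\ ord0 :\ o1 :\ j) n k.
    by apply: sumr_ge0 => k _; apply: hn0.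
  move: hsum; rewrite S1 S2 (big_setD1 j hj) /=.
  move: hLj hup; rewrite Ldef.
  clear -c1 c2 c0 hx hn01 posm; lra.
move=> /existsPn hnone.
apply: (greedy_ok ([set: 'I_J.+2] :\ ord0 :\ o1)).
  move=> j hj; move: (hnone j); rewrite hj /= -leNgt; done.
rewrite Tm; move: hsum; rewrite S1 S2.
clear -hB c2 c0 hx pos3; lra.
Qed.
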